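(* Let $n\geq 2$. The structure $\mathbf{D}_{n,<_1,\ldots,<_n}=(D_n,<,<_1,\ldots,<_n)$ is ultrahomogeneous and its age is $\mathcal{PO}_{n,<_1,\ldots,<_n}$. Consequently, $\mathcal{PO}_{n,<_1,\ldots,<_n}$ is a Fra\''iss\'e class and $\mathbf{D}_{n,<_1,\ldots,<_n}$ is its Fra\''iss\'e limit.
   Context: Fix $n\geq 2$ and a set $D_n\subseteq\mathbb{Q}^n$ which is dense in $\mathbb{Q}^n$ (product topology) and such that no two distinct points of $D_n$ share a common coordinate. On $D_n$, $<$ is the product order ($\mathbf{a}<\mathbf{b}$ iff $a_i\leq b_i$ for all $i$ and $\mathbf{a}\neq\mathbf{b}$) and $<_i$ is the $i$th coordinate order ($\mathbf{a}<_i\mathbf{b}$ iff $a_i<b_i$). Structures are in the signature of $n+1$ binary relation symbols; embeddings are injective maps preserving and reflecting each relation, substructures are subsets with the induced relations. An $n$-dimensional partial order with realizers is a structure $(P,<,<_1,\ldots,<_n)$ where $<_1,\ldots,<_n$ are linear (strict) orders on $P$ and $<$ equals $<_1\cap\cdots\cap<_n$ (i.e. $a<b$ iff $a<_ib$ for all $i$). $\mathcal{PO}_{n,<_1,\ldots,<_n}$ is the class of all finite such structures. A structure is ultrahomogeneous if every isomorphism between finite substructures extends to an automorphism. The age of a structure $\mathbf{M}$ is the class of all finite structures in the same signature embeddable in $\mathbf{M}$. A Fra\''iss\'e class is a nonempty class of finite structures satisfying the hereditary property (closed under structures embeddable into members), joint embedding property (any two members embed into a common member) and amalgamation property (for embeddings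 $e:\mathbf{A}\to\mathbf{B}$, $f:\mathbf{A}\to\mathbf{C}$ of members there are a member $\mathbf{D}$ and embeddings $g:\mathbf{B}\to\mathbf{D}$, $h:\mathbf{C}\to\mathbf{D}$ with $g\circ e=h\circ f$); its Fra\''iss\'e limit is the unique (up to isomorphism) countable ultrahomogeneous structure whose age is the class. *)

(* Defs.v *)
From HB Require Import structures.
From mathcomp Require Import all_boot all_order all_algebra.
From Stdlib Require Import List.
Set Implicit Arguments. Unset Strict Implicit. Unset Printing Implicit Defensive.
Import Order.TTheory GRing.Theory Num.Theory.

Record structure (n : nat) := Structure {
  carrier :> Type;
  rlt : carrier -> carrier -> Prop;
  rlti : 'I_n -> carrier -> carrier -> Prop
}.

Section Model.
Variable n : nat.

Definition finite_structure (A : structure n) : Prop :=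
  exists s : list A, forall x : A, In x s.

Definition embedding (A B : structure n) (f : A -> B) : Prop :=
  (forall x y, f x = f y -> x = y) /\
  (forall x y, rlt x y <-> rlt (f x) (f y)) /\
  (forall i x y, rlti i x y <-> rlti i (f x) (f y)).

Definition embeds (A B : structure n) : Prop := exists f : A -> B, embedding f.

Definition isomorphism (A B : structure n) (f : A -> B) : Prop :=
  embedding f /\ (forall y, exists x, f x = y).

Definition automorphism (M : structure n) (f : M -> M) : Prop := isomorphism f.

Definition substructure (M : structure n) (S : M -> Prop) : structure n :=
  @Structure n {x : M | S x}
    (fun x y => rlt (proj1_sig x) (proj1_sig y))
    (fun i x y => rlti i (proj1_sig x) (proj1_sig y)).

Definition finite_subset (M : structure n) (S : M -> Prop) : Prop :=
  exists s : list M, forall x, S x -> In x s.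

Definition ultrahomogeneous (M : structure n) : Prop :=
  forall (S1 S2 : M -> Prop), finite_subset S1 -> finite_subset S2 ->
  forall g : substructure S1 -> substructure S2, isomorphism g ->
  exists sigma : M -> M, automorphism sigma /\
    forall x : substructure S1, sigma (proj1_sig x) = proj1_sig (g x).

Definition age (M : structure n) (A : structure n) : Prop :=
  finite_structure A /\ embeds A M.

Definition countable_structure (M : structure n) : Prop :=
  exists f : M -> nat, forall x y, f x = f y -> x = y.

Definition class := structure n -> Prop.

Definition Fraisse_class (K : class) : Prop :=
  (forall A, K A -> finite_structure A) /\
  (exists A, K A) /\
  (forall A B, K A -> finite_structure B -> embeds B A -> K B) /\
  (forall A B, K A -> K B -> exists C, K C /\ embeds A C /\ embeds B C) /\
  (forall (A B C : structure n) (e : A -> B) (f : A -> C),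
     K A -> K B -> K C -> embedding e -> embedding f ->
     exists (D : structure n) (g : B -> D) (h : C -> D),
       K D /\ embedding g /\ embedding h /\ forall x, g (e x) = h (f x)).

Definition Fraisse_limit (K : class) (M : structure n) : Prop :=
  countable_structure M /\ ultrahomogeneous M /\ (forall A, age M A <-> K A).

Definition strict_linear_order (T : Type) (r : T -> T -> Prop) : Prop :=
  (forall x, ~ r x x) /\
  (forall x y z, r x y -> r y z -> r x z) /\
  (forall x y, x <> y -> r x y \/ r y x).

Definition is_PO_realizers (A : structure n) : Prop :=
  (forall i, strict_linear_order (rlti i : A -> A -> Prop)) /\
  (forall x y : A, rlt x y <-> forall i, rlti i x y).

Definition PO_class : class :=
  fun A => finite_structure A /\ is_PO_realizers A.

End Model.

Local Open Scope ring_scope.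

(* D is dense in Q^n (product topology): it meets every nonempty open box *)
Definition dense_in_Qn (n : nat) (D : {ffun 'I_n -> rat} -> Prop) : Prop :=
  forall a b : {ffun 'I_n -> rat}, (forall i, a i < b i) ->
  exists d, D d /\ forall i, a i < d i < b i.

Definition no_shared_coordinate (n : nat) (D : {ffun 'I_n -> rat} -> Prop) : Prop :=
  forall d e, D d -> D e -> d <> e -> forall i, d i <> e i.

Definition D_structure (n : nat) (D : {ffun 'I_n -> rat} -> Prop) : structure n :=
  @Structure n {x : {ffun 'I_n -> rat} | D x}
    (fun a b => (forall i, proj1_sig a i <= proj1_sig b i) /\ proj1_sig a <> proj1_sig b)
    (fun i a b => proj1_sig a i < proj1_sig b i).

(* Main.v *)
Require Import Defs.
From HB Require Import structures.
From mathcomp Require Import all_boot all_order all_algebra.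
From mathcomp Require Import lra.
From Stdlib Require Import List Classical ClassicalEpsilon ProofIrrelevance.
Import Order.TTheory GRing.Theory Num.Theory.

Section Interval.
Local Open Scope ring_scope.

Lemma interval_sep (E : Type) (L : list E) (A B : E -> Prop) (f : E -> rat) :
  (forall p q, In p L -> In q L -> A p -> B q -> f p < f q) ->
  exists lo hi, lo < hi /\ (forall p, In p L -> A p -> f p <= lo) /\
                (forall q, In q L -> B q -> hi <= f q).
Proof.
move=> H.
have [c Hc] : exists c, forall p, In p L -> A p -> f p < c.
  elim: L {H} => [|e L [c Hc]]; first by exists 0.
  exists (Num.max c (f e + 1)) => p [<-|Hp] Ap; rewrite lt_max.
    by apply/orP; right; lra.
  by rewrite Hc.
have [hi [Hh1 Hh2]] : exists hi, (forall p, In p L -> A p -> f p < hi) /\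
     (forall q, In q L -> B q -> hi <= f q).
  suff: forall L2, incl L2 L -> exists hi, (forall p, In p L -> A p -> f p < hi) /\
     (forall q, In q L2 -> B q -> hi <= f q) by move/(_ L (incl_refl _)).
  elim=> [|q L2 IH] Hi; first by exists c; split.
  have [hi [H1 H2]] := IH (incl_cons_inv Hi).2.
  case: (classic (B q)) => Bq.
    exists (Num.min hi (f q)); split.
      move=> p Hp Ap; rewrite lt_min H1 //= H //; exact: (incl_cons_inv Hi).1.
    move=> q' [<-|Hq'] Bq'; rewrite ge_min; apply/orP; [right|left] => //.
    exact: H2.
  exists hi; split => // q' [<-|Hq'] Bq' //; exact: H2.
have [lo [Hl1 Hl2]] : exists lo, lo < hi /\ (forall p, In p L -> A p -> f p <= lo).
  suff: forall L1, incl L1 L -> exists lo, lo < hi /\ (forall p, In p L1 -> A p -> f p <= lo).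
    by move/(_ L (incl_refl _)).
  elim=> [|p L1 IH] Hi; first by exists (hi - 1); split => //; lra.
  have [lo [H1 H2]] := IH (incl_cons_inv Hi).2.
  case: (classic (A p)) => Ap.
    exists (Num.max lo (f p)); split.
      rewrite gt_max H1 /=; apply: Hh1 => //; exact: (incl_cons_inv Hi).1.
    move=> p' [<-|Hp'] Ap'; rewrite le_max; apply/orP; [right|left] => //.
    exact: H2.
  exists lo; split => // p' [<-|Hp'] Ap' //; exact: H2.
by exists lo, hi.
Qed.
End Interval.

Definition goodL (X : Type) (Rel : X -> X -> Prop) (L : list X) :=
  forall p q, In p L -> In q L -> Rel p q.
Arguments goodL {X}.

Section BackForth.
Variable T : Type.
Variable Rel : T * T -> T * T -> Prop.
Local Notation goodL := (goodL Rel).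
Hypothesis forth : forall L, goodL L -> forall x, exists y, goodL ((x, y) :: L).
Hypothesis back : forall L, goodL L -> forall y, exists x, goodL ((x, y) :: L).
Hypothesis func : forall a b b', Rel (a, b) (a, b') -> Rel (a, b') (a, b) -> b = b'.
Hypothesis inj : forall a a' b, Rel (a, b) (a', b) -> Rel (a', b) (a, b) -> a = a'.
Variable en : nat -> T.
Hypothesis en_surj : forall x, exists k, en k = x.

Lemma bf (L0 : list (T * T)) : goodL L0 ->
  exists sigma : T -> T,
    (forall p, In p L0 -> sigma p.1 = p.2) /\
    (forall x y, sigma x = sigma y -> x = y) /\
    (forall y, exists x, sigma x = y) /\
    (forall a a', Rel (a, sigma a) (a', sigma a')).
Proof.
move=> G0.
have Fe : forall L x, exists y, goodL L -> goodL ((x, y) :: L).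
  move=> L x; case: (classic (goodL L)) => HL.
    by have [y Hy] := @forth L HL x; exists y.
  by exists x.
have Be : forall L y, exists x, goodL L -> goodL ((x, y) :: L).
  move=> L y; case: (classic (goodL L)) => HL.
    by have [x Hx] := @back L HL y; exists x.
  by exists y.
pose F L x := proj1_sig (constructive_indefinite_description _ (Fe L x)).
pose B L y := proj1_sig (constructive_indefinite_description _ (Be L y)).
have FP : forall L x, goodL L -> goodL ((x, F L x) :: L).
  by move=> L x; rewrite /F; case: constructive_indefinite_description.
have BP : forall L y, goodL L -> goodL ((B L y, y) :: L).
  by move=> L y; rewrite /B; case: constructive_indefinite_description.
pose fix sq k := match k with 0 => L0 | S k =>
   let L := sq k in let L1 := (en k, F L (en k)) :: L in (B L1 (en k), en k) :: L1 end.
have Gs : forall k, goodL (sq k).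
  by elim=> [|k IH] //=; apply: BP; apply: FP.
have Is : forall j d, incl (sq j) (sq (j + d)%N).
  move=> j; elim=> [|d IH]; first by rewrite addn0; apply: incl_refl.
  rewrite addnS /=; move=> p Hp; right; right; exact: IH.
have Ile : forall j k, (j <= k)%N -> incl (sq j) (sq k).
  by move=> j k /subnKC <-; apply: Is.
have idx : forall x, {k | en k = x}.
  by move=> x; apply: constructive_indefinite_description.
pose sigma x := F (sq (proj1_sig (idx x))) x.
have Sin : forall x, In (x, sigma x) (sq (proj1_sig (idx x)).+1).
  move=> x; rewrite /sigma; case: (idx x) => k /= <-; by right; left.
have Both : forall p q j k, In p (sq j) -> In q (sq k) -> Rel p q.
  move=> p q j k Hp Hq; apply: (Gs (maxn j k)).
    by apply: (Ile j) => //; rewrite leq_maxl.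
  by apply: (Ile k) => //; rewrite leq_maxr.
have RS : forall a a', Rel (a, sigma a) (a', sigma a').
  by move=> a a'; apply: Both (Sin a) (Sin a').
exists sigma; split; last split; last split => //.
- move=> [a b] Hp /=; apply: func; [apply: (Both _ _ _ 0%N (Sin a)) => // | apply: (Both _ _ 0%N _ Hp (Sin a)) => //].
- move=> x y E; apply: (@inj x y (sigma x)); [have := RS x y | have := RS y x]; by rewrite -E.
- move=> y; have [k Hk] := en_surj y.
  set x := B ((en k, F (sq k) (en k)) :: sq k) (en k).
  have Hx : In (x, y) (sq k.+1) by rewrite -Hk; simpl; left.
  exists x; apply: func; [exact: (Both _ _ _ _ (Sin x) Hx) | exact: (Both _ _ _ _ Hx (Sin x))].
Qed.
End BackForth.
Arguments bf {T Rel}.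

Lemma sig_eqP (T : Type) (P : T -> Prop) (a b : {x | P x}) :
  proj1_sig a = proj1_sig b -> a = b.
Proof.
case: a => a Pa; case: b => b Pb /= E; subst b; f_equal; apply: proof_irrelevance.
Qed.

Lemma sig_list (T : Type) (S : T -> Prop) (s : list T) :
  exists l : list {x | S x}, forall y, In (proj1_sig y) s -> In y l.
Proof.
elim: s => [|x s [l Hl]]; first by exists nil.
case: (classic (S x)) => Sx.
  exists (exist _ x Sx :: l) => y [E|Hy]; last by right; apply: Hl.
  by left; apply: sig_eqP.
exists l => y [E|Hy]; last by apply: Hl.
by exfalso; apply: Sx; rewrite E; case: y {E}.
Qed.

Section DStruct.
Local Open Scope ring_scope.
Variable n : nat.
Variable D : {ffun 'I_n -> rat} -> Prop.
Hypothesis Hn : (0 < n)%N.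
Hypothesis Hd : dense_in_Qn D.
Hypothesis Hns : no_shared_coordinate D.

Let Dt := D_structure D.
Let i0 : 'I_n := Ordinal Hn.

Lemma D_neq (a b : Dt) : a <> b -> forall i, proj1_sig a i <> proj1_sig b i.
Proof.
move=> Nab i; case: a Nab => a Da; case: b => b Db /= Nab; apply: Hns => // E.
by apply: Nab; apply: sig_eqP.
Qed.

Lemma D_eq (a b : Dt) : ~ (proj1_sig a i0 < proj1_sig b i0) ->
  ~ (proj1_sig b i0 < proj1_sig a i0) -> a = b.
Proof.
move=> H1 H2; apply: NNPP => N; have := @D_neq a b N i0 => /eqP.
by move/lt_total/orP => [] ?.
Qed.

Lemma D_rlt (a b : Dt) : rlt a b <-> forall i, proj1_sig a i < proj1_sig b i.
Proof.
split.
  move=> [H1 H2] i; rewrite lt_neqAle H1 andbT; apply/eqP.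
  apply: (@D_neq a b) => E; apply: H2; by rewrite E.
move=> H; split; first by move=> i; apply: ltW.
by move=> E; have := H i0; rewrite E ltxx.
Qed.

Lemma D_sl i : strict_linear_order (fun a b : Dt => proj1_sig a i < proj1_sig b i).
Proof.
split; first by move=> x; rewrite ltxx.
split; first by move=> x y z; apply: lt_trans.
move=> x y /D_neq /(_ i) /eqP /lt_total /orP [] ?; by [left|right].
Qed.

Definition RelS (S : Type) (r : 'I_n -> S -> S -> Prop) (p q : S * Dt) :=
  forall i, r i p.1 q.1 <-> proj1_sig p.2 i < proj1_sig q.2 i.
Arguments RelS {S}.

Lemma forth_gen (S : Type) (r : 'I_n -> S -> S -> Prop)
  (Hr : forall i, strict_linear_order (r i)) (L : list (S * Dt)) :
  goodL (RelS r) L -> forall x, exists y, goodL (RelS r) ((x, y) :: L).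
Proof.
move=> G x.
case: (classic (exists p, In p L /\ p.1 = x)) => [[[a b] [Hp /= <-]]|Hno].
  exists b => p q Hp' Hq'; apply: G.
    by case: Hp' => [<-|].
  by case: Hq' => [<-|].
have Hi : forall i, exists lh : rat * rat, lh.1 < lh.2 /\
   (forall p, In p L -> r i p.1 x -> proj1_sig p.2 i <= lh.1) /\
   (forall q, In q L -> r i x q.1 -> lh.2 <= proj1_sig q.2 i).
  move=> i.
  have [|lo [hi [H1 [H2 H3]]]] := @interval_sep _ L (fun p => r i p.1 x) (fun q => r i x q.1)
      (fun p => proj1_sig p.2 i).
    move=> p q Hp Hq Ap Bq; apply/(G p q Hp Hq i).
    by have [_ [Ht _]] := Hr i; apply: Ht Bq.
  by exists (lo, hi).
pose lh i := proj1_sig (constructive_indefinite_description _ (Hi i)).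
have Hlh : forall i, (lh i).1 < (lh i).2 /\
   (forall p, In p L -> r i p.1 x -> proj1_sig p.2 i <= (lh i).1) /\
   (forall q, In q L -> r i x q.1 -> (lh i).2 <= proj1_sig q.2 i).
  by move=> i; rewrite /lh; case: constructive_indefinite_description.
have [|d [Dd Hdd]] := Hd [ffun i => (lh i).1] [ffun i => (lh i).2].
  by move=> i; rewrite !ffunE; case: (Hlh i).
exists (exist _ d Dd).
have Nx : forall q, In q L -> x <> q.1 by move=> q Hq E; apply: Hno; exists q.
have Hx1 : forall q i, In q L -> (r i x q.1 <-> d i < proj1_sig q.2 i).
  move=> q i Hq; have := Hdd i; rewrite !ffunE => /andP [d1 d2].
  have [_ [H2 H3]] := Hlh i.
  split => [B|Lt].
    by apply: lt_le_trans d2 _; apply: H3.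
  have [_ [_ Htot]] := Hr i; case: (Htot _ _ (Nx q Hq)) => // A.
  by have := lt_le_trans (le_lt_trans (H2 q Hq A) d1) (ltW Lt); rewrite ltxx.
have Hx2 : forall q i, In q L -> (r i q.1 x <-> proj1_sig q.2 i < d i).
  move=> q i Hq; have := Hdd i; rewrite !ffunE => /andP [d1 d2].
  have [_ [H2 H3]] := Hlh i.
  split => [A|Lt].
    by apply: le_lt_trans d1; apply: H2.
  have [_ [_ Htot]] := Hr i; case: (Htot _ _ (Nx q Hq)) => // B.
  by have := lt_le_trans (lt_trans Lt d2) (H3 q Hq B); rewrite ltxx.
move=> p q [<-|Hp] [<-|Hq] i /=.
- have [Hirr _] := Hr i; split => H; exfalso; [exact: Hirr H|by move: H; rewrite ltxx].
- exact: Hx1.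
- exact: Hx2.
- exact: G.
Qed.

Lemma extend_emb (A : structure n) : PO_class A ->
  forall L0 : list (A * Dt), goodL (RelS (fun i (x y : A) => rlti i x y)) L0 ->
  exists beta : A -> Dt, embedding beta /\ forall p, In p L0 -> beta p.1 = p.2.
Proof.
move=> [[sA HsA] [Hsl Hlt]] L0 G0.
have [L [GL [IL CL]]] : exists L, goodL (RelS (fun i (x y : A) => rlti i x y)) L /\
   incl L0 L /\ forall x, In x sA -> exists y, In (x, y) L.
  elim: sA {HsA} => [|x s [L [GL [IL CL]]]]; first by exists L0; split => //; split.
  have [y Gy] := @forth_gen A (fun i (x y : A) => rlti i x y) Hsl L GL x.
  exists ((x, y) :: L); split => //; split; first by move=> p Hp; right; apply: IL.
  move=> z [<-|Hz]; first by exists y; left.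
  by have [y' Hy'] := CL z Hz; exists y'; right.
have Hc : forall x, exists y, In (x, y) L by move=> x; apply: CL.
pose beta x := proj1_sig (constructive_indefinite_description _ (Hc x)).
have Hb : forall x, In (x, beta x) L.
  by move=> x; rewrite /beta; case: constructive_indefinite_description.
have Ri : forall i x y, rlti i x y <-> rlti i (beta x) (beta y).
  by move=> i x y; apply: (GL _ _ (Hb x) (Hb y) i).
exists beta; split.
  split.
    move=> x y E; apply: NNPP => Nxy.
    have [_ [_ Htot]] := Hsl i0.
    case: (Htot _ _ Nxy) => /(Ri i0); rewrite /= E ltxx //.
  split => [x y|]; last exact: Ri.
  rewrite Hlt D_rlt; split => H i; by apply/Ri; apply: H.
move=> [a b] Hp /=; apply: D_eq.
  move/(GL _ _ (Hb a) (IL _ Hp) i0) => /=; have [Hirr _] := Hsl i0; exact: Hirr.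
move/(GL _ _ (IL _ Hp) (Hb a) i0) => /=; have [Hirr _] := Hsl i0; exact: Hirr.
Qed.

Definition RelD := RelS (fun i (a b : Dt) => proj1_sig a i < proj1_sig b i).

Lemma D_bf (L0 : list (Dt * Dt)) : goodL RelD L0 ->
  exists sigma : Dt -> Dt,
    (forall p, In p L0 -> sigma p.1 = p.2) /\
    (forall x y, sigma x = sigma y -> x = y) /\
    (forall y, exists x, sigma x = y) /\
    (forall a a', RelD (a, sigma a) (a', sigma a')).
Proof.
move=> G0.
have [|d0 [Dd0 _]] := Hd [ffun => 0] [ffun => 1].
  by move=> i; rewrite !ffunE ltr01.
pose e0 : Dt := exist _ d0 Dd0.
pose en k : Dt := match unpickle k with
  | Some f => match excluded_middle_informative (D f) with
              | left H => exist _ f H | right _ => e0 end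
  | None => e0 end.
have en_surj : forall x, exists k, en k = x.
  move=> x; exists (pickle (proj1_sig x)); rewrite /en pickleK.
  case: excluded_middle_informative => H; first by apply: sig_eqP.
  by exfalso; apply: H; exact: (proj2_sig x).
have Dsl := D_sl.
apply: (bf _ _ _ _ _ en_surj _ G0).
- move=> L G x; exact: (@forth_gen Dt (fun i (a b : Dt) => proj1_sig a i < proj1_sig b i) Dsl L G x).
- move=> L G y.
  pose sw (p : Dt * Dt) := (p.2, p.1).
  have G' : goodL RelD (map sw L).
    move=> p q /in_map_iff [p0 [<- Hp]] /in_map_iff [q0 [<- Hq]] i.
    exact: iff_sym (G p0 q0 Hp Hq i).
  have [x Gx] := @forth_gen Dt (fun i (a b : Dt) => proj1_sig a i < proj1_sig b i) Dsl _ G' y.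
  exists x => p q Hp Hq i.
  have Hs : forall p, In p ((x, y) :: L) -> In (sw p) ((y, x) :: map sw L).
    move=> p0 [<-|H0]; [by left | by right; apply: in_map].
  exact: iff_sym (Gx _ _ (Hs p Hp) (Hs q Hq) i).
- move=> a b b' H1 H2; apply: D_eq.
    by move/(H1 i0) => /=; rewrite ltxx.
  by move/(H2 i0) => /=; rewrite ltxx.
- move=> a a' b H1 H2; apply: D_eq.
    by move/(H1 i0) => /=; rewrite ltxx.
  by move/(H2 i0) => /=; rewrite ltxx.
Qed.

Lemma D_ultra : ultrahomogeneous Dt.
Proof.
move=> S1 S2 [s1 Hs1] _ g [[ginj [_ gri]] gsurj].
have [l1 Hl1] := @sig_list _ S1 s1.
pose L0 := map (fun s : substructure S1 => (proj1_sig s, proj1_sig (g s))) l1.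
have G0 : goodL RelD L0.
  move=> p q /in_map_iff [s [<- _]] /in_map_iff [t [<- _]] i /=.
  exact: (gri i s t).
have [sigma [Hext [Sinj [Ssurj SR]]]] := D_bf L0 G0.
exists sigma; split.
  split; last exact: Ssurj.
  split; first exact: Sinj.
  split => [x y|i x y]; last exact: (SR x y i).
  split => [/D_rlt H|/D_rlt H]; apply/D_rlt => i; apply/(SR x y i); exact: H.
move=> x; apply: (Hext (proj1_sig x, proj1_sig (g x))); apply: in_map.
apply: Hl1; apply: Hs1; exact: proj2_sig x.
Qed.

Lemma age_PO (A : structure n) : age Dt A <-> PO_class A.
Proof.
split.
- move=> [HA [f [finj [flt fri]]]]; split => //; split.
  + move=> i; split; first by move=> x /(fri i) /=; rewrite ltxx.
    split.
      move=> x y z /(fri i) H1 /(fri i) H2; apply/(fri i); exact: lt_trans H1 H2.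
    move=> x y Nxy; have Nf : f x <> f y by move/finj.
    have [_ [_ Ht]] := D_sl i; case: (Ht _ _ Nf) => H; [left|right]; exact/(fri i).
  + move=> x y; split => [/flt /D_rlt H i | H]; first exact/(fri i)/H.
    apply/flt/D_rlt => i; exact/(fri i)/H.
- move=> HA; split; first exact: HA.1.
  have [|beta [Hb _]] := @extend_emb A HA nil; first by move=> p q [].
  by exists beta.
Qed.

Lemma sub_PO (S : Dt -> Prop) : finite_subset S -> PO_class (substructure S).
Proof.
move=> [s Hs]; apply/age_PO; split.
  have [l Hl] := @sig_list _ S s; exists l => y; apply: Hl; apply: Hs; exact: proj2_sig y.
exists (fun x => proj1_sig x); split; first by move=> x y; apply: sig_eqP.
by split => *; exact: iff_refl.
Qed.

Definition amS (B C : structure n) (beta : B -> Dt) (gamma : C -> Dt) (d : Dt) : Prop :=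
  (exists b, beta b = d) \/ (exists c, gamma c = d).
Arguments amS {B C}.
Definition amB (B C : structure n) (beta : B -> Dt) (gamma : C -> Dt) (b : B) :
  substructure (amS beta gamma) :=
  exist (amS beta gamma) (beta b) (or_introl (ex_intro (fun b' => beta b' = beta b) b erefl)).
Arguments amB {B C}.
Definition amC (B C : structure n) (beta : B -> Dt) (gamma : C -> Dt) (c : C) :
  substructure (amS beta gamma) :=
  exist (amS beta gamma) (gamma c) (or_intror (ex_intro (fun c' => gamma c' = gamma c) c erefl)).
Arguments amC {B C}.

Lemma amalg (B C : structure n) (beta : B -> Dt) (gamma : C -> Dt) :
  finite_structure B -> finite_structure C -> embedding beta -> embedding gamma ->
  PO_class (substructure (amS beta gamma)) /\ embedding (amB beta gamma) /\
  embedding (amC beta gamma).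
Proof.
move=> [sB HB] [sC HC] [bi [bl br]] [ci [cl cr]]; split.
  apply: sub_PO; exists (map beta sB ++ map gamma sC).
  move=> d [[b <-]|[c <-]]; apply: in_or_app; [left|right]; apply: in_map; auto.
split.
  split; first by move=> x y E; apply: bi; exact: (f_equal (@proj1_sig _ _) E).
  by split; [exact: bl | exact: br].
split; first by move=> x y E; apply: ci; exact: (f_equal (@proj1_sig _ _) E).
by split; [exact: cl | exact: cr].
Qed.

Lemma emb_comp (A B C : structure n) (f : A -> B) (g : B -> C) :
  embedding f -> embedding g -> embedding (fun x => g (f x)).
Proof.
move=> [fi [fl fr]] [gi [gl gr]]; split; first by move=> x y /gi /fi.
split => [x y|i x y]; [exact: iff_trans (fl x y) (gl _ _) | exact: iff_trans (fr i x y) (gr i _ _)].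
Qed.

Lemma FC : Fraisse_class (@PO_class n).
Proof.
split; first by move=> A [].
split.
  exists (@Structure n Empty_set (fun _ _ => False) (fun _ _ _ => False)).
  split; first by exists nil; case.
  split; last by case.
  by move=> i; split; [case | split; case].
split.
  move=> A B KA FB [h Hh]; apply/age_PO.
  have [_ [f Hf]] := (age_PO A).2 KA; split => //.
  exists (fun x => f (h x)); exact: emb_comp Hh Hf.
split.
  move=> A B KA KB.
  have [_ [al Hal]] := (age_PO A).2 KA; have [_ [be Hbe]] := (age_PO B).2 KB.
  have [P [E1 E2]] := @amalg A B al be KA.1 KB.1 Hal Hbe.
  exists (substructure (amS al be)); split => //; split; [exists (amB al be) | exists (amC al be)] => //.
move=> A B C e f KA KB KC He Hf.
have [_ [gam Hgam]] := (age_PO C).2 KC.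
have [sA HsA] := KA.1.
pose L0 := map (fun a => (e a, gam (f a))) sA.
have G0 : goodL (RelS (fun i (x y : B) => rlti i x y)) L0.
  move=> p q /in_map_iff [a [<- _]] /in_map_iff [a' [<- _]] i /=.
  exact: iff_trans (iff_sym (He.2.2 i a a')) (iff_trans (Hf.2.2 i a a') (Hgam.2.2 i _ _)).
have [be [Hbe Hext]] := @extend_emb B KB L0 G0.
have Hc : forall a, be (e a) = gam (f a).
  by move=> a; apply: (Hext (e a, gam (f a))); apply: in_map; apply: HsA.
have [P [E1 E2]] := @amalg B C be gam KB.1 KC.1 Hbe Hgam.
exists (substructure (amS be gam)), (amB be gam), (amC be gam).
split => //; split => //; split => //.
by move=> x; apply: sig_eqP => /=; exact: Hc x.
Qed.

Lemma main_D : ultrahomogeneous Dt /\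
  (forall A : structure n, age Dt A <-> PO_class A) /\
  Fraisse_class (@PO_class n) /\ Fraisse_limit (@PO_class n) Dt.
Proof.
split; first exact: D_ultra.
split; first exact: age_PO.
split; first exact: FC.
split; last by split; [exact: D_ultra | exact: age_PO].
exists (fun x : Dt => pickle (proj1_sig x)) => x y /(pcan_inj pickleK) E.
exact: sig_eqP.
Qed.

End DStruct.

Theorem theorem3p2 (n : nat) (D : {ffun 'I_n -> rat} -> Prop) :
  (2 <= n)%N -> dense_in_Qn D -> no_shared_coordinate D ->
  ultrahomogeneous (D_structure D) /\
  (forall A : structure n, age (D_structure D) A <-> PO_class A) /\
  Fraisse_class (@PO_class n) /\
  Fraisse_limit (@PO_class n) (D_structure D).
Proof.
move=> H2 Hd Hns.
have Hn : (0 < n)%N by apply: leq_trans H2.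
exact: (@main_D n D Hn Hd Hns).
Qed.
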